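(* Fix $d\ge1$, the feasible set $\mathcal{X}=\mathbb{R}^d$, starting point $x_0=\mathbf{0}$, and $0<\mu\le L$, with quadratic switching cost. For every online algorithm $\mathcal{A}$ operating in the limited information setting, the competitive ratio satisfies $\mathrm{cr}_{\mathcal{A}}\ge L$.
   Context: A problem instance consists of a horizon $T\ge1$ and differentiable functions $f_1,\dots,f_T:\mathbb{R}^d\to[0,\infty)$ with $\frac{\mu}{2}\|y-x\|^2\le f_t(y)-f_t(x)-\langle\nabla f_t(x),y-x\rangle\le\frac{L}{2}\|y-x\|^2$ for all $x,y$. An online algorithm in the limited information setting chooses, at each time $t$, an action $x_t$ using only $x_0$, the known parameters, and gradients of $f_{t-1}$ (and of earlier functions) evaluated at finitely many (adaptively chosen) points; in particular $x_t$ is chosen without any information about $f_t,\dots,f_T$. The algorithm's cost is $C_{\mathcal{A}}=\sum_{t=1}^T\big(f_t(x_t)+\frac12\|x_t-x_{t-1}\|^2\big)$, $C_{\mathsf{OPT}}$ is the minimum of the same expression over all $(x_1,\dots,x_T)$ with the same $x_0$, and $\mathrm{cr}_{\mathcal{A}}=\sup C_{\mathcal{A}}/C_{\mathsf{OPT}}$ over all problem instances. *)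

(* Defs.v *)
From HB Require Import structures.
From mathcomp Require Import all_boot all_order all_algebra.
From mathcomp Require Import all_classical all_reals all_analysis.
Set Implicit Arguments. Unset Strict Implicit. Unset Printing Implicit Defensive.
Import Order.TTheory GRing.Theory Num.Theory.
Import numFieldNormedType.Exports.
Local Open Scope classical_set_scope.
Local Open Scope ring_scope.

Section OCO.
Variables (R : realType) (d : nat).
Notation vec := 'rV[R]_d.

Definition dot (u v : vec) : R := \sum_(i < d) u 0 i * v 0 i.
Definition sqnorm (u : vec) : R := dot u u.

Definition valid_instance (mu L : R) (T : nat) (f : nat -> vec -> R)
    (grad : nat -> vec -> vec) : Prop :=
  (1 <= T)%N /\
  forall t : nat, (1 <= t <= T)%N ->
    [/\ (forall x, 0 <= f t x),
        (forall x, differentiable (f t) x),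
        (forall x h, 'd (f t) x h = dot (grad t x) h) &
        (forall x y,
           mu / 2 * sqnorm (y - x)
             <= f t y - f t x - dot (grad t x) (y - x)
           /\ f t y - f t x - dot (grad t x) (y - x) <= L / 2 * sqnorm (y - x))].

(* Adaptive gradient-query programs: either return an action, or query the
   gradient of f_s at a point y and continue depending on the answer.
   Being an inductive type, every run uses finitely many queries. *)
Inductive prog : Type :=
  | Ret : vec -> prog
  | Query : nat -> vec -> (vec -> prog) -> prog.

Fixpoint run (oracle : nat -> vec -> vec) (p : prog) : vec :=
  match p with
  | Ret x => x
  | Query s y k => run oracle (k (oracle s y))
  end.

(* A deterministic online algorithm in the limited information setting:
   for horizon T and time t, a query program computing x_t.  (It may depend
   on the known parameters d, mu, L, x_0 = 0 and T, since it is chosen after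
   them.)  At time t, queries about f_s are answered with grad s only for
   1 <= s < t; otherwise the answer is 0 (no information on f_t..f_T). *)
Definition algorithm := nat -> nat -> prog.

Definition limited_oracle (grad : nat -> vec -> vec) (t : nat) :
    nat -> vec -> vec :=
  fun s y => if (0 < s < t)%N then grad s y else 0.

Definition alg_traj (A : algorithm) (T : nat) (grad : nat -> vec -> vec)
    (t : nat) : vec :=
  if t == 0%N then 0 else run (limited_oracle grad t) (A T t).

Definition cost (T : nat) (f : nat -> vec -> R) (x : nat -> vec) : R :=
  \sum_(1 <= t < T.+1) (f t (x t) + 1 / 2 * sqnorm (x t - x t.-1)).

Definition alg_cost (A : algorithm) (T : nat) (f : nat -> vec -> R)
    (grad : nat -> vec -> vec) : R :=
  cost T f (alg_traj A T grad).

Definition opt_cost (T : nat) (f : nat -> vec -> R) : R :=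
  inf [set cost T f x | x in [set x : nat -> vec | x 0%N = 0]].

End OCO.

(* Main.v *)
Require Import Defs.
From HB Require Import structures.
From mathcomp Require Import all_boot all_order all_algebra.
From mathcomp Require Import all_classical all_reals all_analysis lra ring.
Import Order.TTheory GRing.Theory Num.Theory.
Import numFieldNormedType.Exports.
Local Open Scope classical_set_scope.
Local Open Scope ring_scope.

Set Implicit Arguments. Unset Strict Implicit.
Section Aux.
Variables (R : realType) (d : nat).
Notation vec := 'rV[R]_d.

Lemma dotDl (u w v : vec) : dot (u + w) v = dot u v + dot w v.
Proof. by rewrite /dot -big_split; apply: eq_bigr => i _; rewrite mxE mulrDl. Qed.
Lemma dotZl k (u v : vec) : dot (k *: u) v = k * dot u v.
Proof. by rewrite /dot mulr_sumr; apply: eq_bigr => i _; rewrite mxE mulrA. Qed.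
Lemma dotC (u v : vec) : dot u v = dot v u.
Proof. by apply: eq_bigr => i _; rewrite mulrC. Qed.
Lemma dotNl (u v : vec) : dot (- u) v = - dot u v.
Proof. by rewrite -scaleN1r dotZl mulN1r. Qed.
Lemma dotBl (u w v : vec) : dot (u - w) v = dot u v - dot w v.
Proof. by rewrite dotDl dotNl. Qed.
Lemma dotDr (u w v : vec) : dot v (u + w) = dot v u + dot v w.
Proof. by rewrite dotC dotDl dotC [dot w _]dotC. Qed.
Lemma dotZr k (u v : vec) : dot v (k *: u) = k * dot v u.
Proof. by rewrite dotC dotZl dotC. Qed.
Lemma dotBr (u w v : vec) : dot v (u - w) = dot v u - dot v w.
Proof. by rewrite dotC dotBl dotC [dot w _]dotC. Qed.
Lemma sqnorm_ge0 (u : vec) : 0 <= sqnorm u.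
Proof. by apply: sumr_ge0 => i _; rewrite -expr2 sqr_ge0. Qed.

Lemma coord_is_diff (i : 'I_d) (x : vec) :
  is_diff x (fun y : vec => y 0 i) (fun y : vec => y 0 i).
Proof.
have lin : linear (fun y : vec => y 0 i) by move=> a u w; rewrite !mxE.
pose lM := GRing.isLinear.Build _ _ _ _ _ lin.
pose fL : {linear vec -> R^o} := HB.pack (fun y : vec => y 0 i) lM.
have cont : continuous fL by exact: coord_continuous.
apply: DiffDef; first exact: linear_differentiable cont.
exact: diff_lin cont.
Qed.

Lemma sum_is_diff n (F dF : 'I_n -> vec -> R) (x : vec) :
  (forall i, is_diff x (F i) (dF i)) ->
  is_diff x (\sum_(i < n) F i) (\sum_(i < n) dF i).
Proof.
move=> H; elim/big_ind2 : _ => //.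
  exact: is_diff_cst.
by move=> ? ? ? ? ? ?; apply: is_diffD.
Qed.

Lemma sq_is_diff (v : vec) (k : R) (x : vec) :
  is_diff x (fun y : vec => k * sqnorm (y - v))
    (fun h => dot ((2 * k) *: (x - v)) h).
Proof.
pose g (i : 'I_d) := (fun y : vec => y 0 i) - cst (v 0 i).
have hg i : is_diff x (g i) (fun y : vec => y 0 i).
  apply: (is_diff_eq (is_diffB (coord_is_diff i x) (is_diff_cst (v 0 i) x))).
  by apply/funext => y /=; rewrite !fctE subr0.
have hs := (@sum_is_diff d (fun i => k *: (g i * g i))
  (fun i => k *: (g i x *: (fun y : vec => y 0 i) + g i x *: (fun y : vec => y 0 i)))
  x (fun i => is_diffZ k (is_diffM (hg i) (hg i)))).
have E1 : (fun y : vec => k * sqnorm (y - v)) = \sum_(i < d) k *: (g i * g i).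
  apply/funext => y; rewrite fct_sumE /sqnorm /dot mulr_sumr.
  by apply: eq_bigr => i _; rewrite /g !fctE !mxE.
rewrite E1.
have E2 : (\sum_(i < d) k *: (g i x *: (fun y : vec => y 0 i) + g i x *: (fun y : vec => y 0 i)))
   = (fun h => dot ((2 * k) *: (x - v)) h).
  apply/funext => h.
  rewrite fct_sumE dotZl /dot mulr_sumr; apply: eq_bigr => i _.
  rewrite /g !fctE !mxE /=. have sc : forall a b : R, a *: b = a * b by [].
  rewrite !sc; lra.
by rewrite E2 in hs.
Qed.
Lemma sqnormZ k (u : vec) : sqnorm (k *: u) = k * k * sqnorm u.
Proof. by rewrite /sqnorm dotZl dotZr mulrA. Qed.
Lemma sqnormD (p q : vec) : sqnorm (p + q) = sqnorm p + 2 * dot p q + sqnorm q.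
Proof. rewrite /sqnorm dotDl !dotDr [dot q p]dotC; lra. Qed.
End Aux.

Theorem lemma9 (R : realType) (d : nat) (mu L : R) :
  (1 <= d)%N -> 0 < mu -> mu <= L ->
  forall A : algorithm R d,
  forall c : R, 0 < c -> c < L ->
  exists (T : nat) (f : nat -> 'rV[R]_d -> R) (grad : nat -> 'rV[R]_d -> 'rV[R]_d),
    valid_instance mu L T f grad /\
    c * opt_cost T f < alg_cost A T f grad.
Proof.
move=> d1 mu0 muL A c c0 cL.
have L0 : 0 < L by apply: lt_le_trans muL.
pose a : 'rV[R]_d := run (fun _ _ => 0) (A 1%N 1%N).
pose w : 'rV[R]_d := const_mx 1.
have w2 : sqnorm w = d%:R.
  rewrite /sqnorm /dot; under eq_bigr do rewrite mxE mulr1.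
  by rewrite sumr_const card_ord.
have n1 : 1 <= (d%:R : R) by rewrite ler1n.
pose s : R := if 0 <= dot a w then -1 else 1.
have sa : s * dot a w <= 0.
  rewrite /s; case: ifP => h; first by rewrite mulN1r oppr_le0.
  by rewrite mul1r; apply: ltW; rewrite ltNge h.
have ss : s * s = 1 by rewrite /s; case: ifP => _; rewrite ?mulN1r ?opprK ?mulr1.
pose v := s *: w.
have v2 : sqnorm v = d%:R by rewrite sqnormZ ss mul1r w2.
pose F := fun y : 'rV[R]_d => L / 2 * sqnorm (y - v).
exists 1%N, (fun _ => F), (fun _ x => L *: (x - v)).
split.
  split => // t _; split.
  - by move=> x; rewrite /F mulr_ge0 ?sqnorm_ge0 // divr_ge0 // ltW.
  - move=> x; have H := sq_is_diff v (L / 2) x; exact: ex_diff.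
  - move=> x h; have H := sq_is_diff v (L / 2) x; rewrite /F diff_val.
    by congr (dot (_ *: _) h); lra.
  - move=> x y.
    have E : F y - F x - dot (L *: (x - v)) (y - x) = L / 2 * sqnorm (y - x).
      rewrite /F; have -> : y - v = (x - v) + (y - x) by apply/rowP => i; rewrite !mxE; lra.
      rewrite (sqnormD (x - v)) dotZl; move: (sqnorm (x - v)) (dot (x - v) (y - x)) (sqnorm (y - x)) => p q r; by field.
    rewrite E; split => //.
    by apply: ler_wpM2r; [exact: sqnorm_ge0 | lra].
have lo : forall grad : nat -> 'rV[R]_d -> 'rV[R]_d, limited_oracle grad 1 = (fun (_ : nat) (_ : 'rV[R]_d) => (0 : 'rV[R]_d)).
  move=> grad; rewrite /limited_oracle; apply: boolp.funext => -[|k]; by apply: boolp.funext => y.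
rewrite /alg_cost /cost /alg_traj big_nat1 /= lo -/a.
pose m := (L + 1)^-1.
have m0 : 0 < m by rewrite invr_gt0; lra.
have mL : m * (L + 1) = 1 by rewrite mulVf // gt_eqF //; lra.
pose xo := fun t : nat => if t == 0%N then (0 : 'rV[R]_d) else (L * m) *: v.
have hopt : opt_cost 1 (fun _ => F) <= L * m / 2 * d%:R.
  have lb : has_lbound [set cost 1 (fun _ => F) x | x in [set x : nat -> 'rV[R]_d | x 0%N = 0]].
    exists 0 => _ [x _ <-]; apply: sumr_ge0 => i _; apply: addr_ge0.
      by rewrite /F mulr_ge0 ?sqnorm_ge0 // divr_ge0 // ltW.
    by rewrite mulr_ge0 ?sqnorm_ge0.
  apply: le_trans; first by apply: (ge_inf lb); exists xo.
  rewrite /cost big_nat1 /xo /= subr0 /F.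
  have -> : L * m *: v - v = (- m) *: v.
    by rewrite -{2}(scale1r v) -scalerBl; congr (_ *: _); lra.
  rewrite !sqnormZ ss mul1r w2.
  rewrite le_eqVlt; apply/orP; left; apply/eqP.
  move: (d%:R : R) mL => n mL'.
  have -> : L * m / 2 * n = L * m / 2 * n * (m * (L + 1)) by rewrite mL' mulr1.
  by field.
have halg : L / 2 * d%:R <= F a + 1 / 2 * sqnorm (a - 0).
  have hv : dot a (- v) = - (s * dot a w) by rewrite /v -scaleNr dotZr mulNr.
  have hv2 : sqnorm (- v) = d%:R by rewrite -scaleN1r sqnormZ mulN1r opprK mul1r v2.
  rewrite subr0 /F (sqnormD a (- v)) hv hv2.
  have h0 := sqnorm_ge0 a.
  have : 0 <= L / 2 * (sqnorm a - 2 * (s * dot a w)) by apply: mulr_ge0; lra.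
  lra.
apply: lt_le_trans halg.
apply: (le_lt_trans (ler_wpM2l (ltW c0) hopt)).
have cm : c * m < 1 by rewrite -mL mulrC ltr_pM2l //; lra.
have : c * m * (L / 2 * d%:R) < 1 * (L / 2 * d%:R).
  by rewrite ltr_pM2r // mulr_gt0 // ?divr_gt0 //; lra.
rewrite mul1r; apply: le_lt_trans. rewrite le_eqVlt; apply/orP; left; apply/eqP; ring.
Qed.
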